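(* Let $q$ be a prime power, $\mathcal{H}_q$ the Hermitian curve over $\mathbb{F}_{q^2}$ with $g=g(\mathcal{H}_q)=\frac{q(q-1)}{2}$, and $X,T$ fixed positive integers. Consider the $X$-secure, $T$-private PIR schemes with rate $\frac{L}{N}$, $N=L+X+T+3q^2-q-2$, obtained from the Hermitian construction for the admissible values of $L$, namely those $L$ with $L+g\equiv 0\pmod q$ for which the required points fit in $\mathcal{H}_q(\mathbb{F}_{q^2})$, i.e. $q^3+1\ge 2L+X+T+4q^2-2q$. Then the maximum rate of these schemes is $\mathcal{R}^{\mathcal{H}_q}_{\max}=\frac{L}{N}$ with $L=mq-g$ and $$m=\left\lfloor\frac{q^3-3q^2+q+1-(X+T)}{2q}\right\rfloor .$$
   Context: The Hermitian curve $\mathcal{H}_q$ is the curve over $\mathbb{F}_{q^2}$ with affine equation $X^{q+1}=Y^q+Y$; it has exactly $q^3+1$ $\mathbb{F}_{q^2}$-rational points, $P_\infty$ denotes its point at infinity and $P_0=(0,0)$. The Hermitian construction: for $L$ with $L+g\equiv 0\pmod q$, $m=(L+g)/q$, one uses $mq$ affine rational points $P_{i,z}=(\alpha_i,\beta_{i,z})$ ($\alpha_i\ne0$ distinct, $i\in[m]$, $z\in[q]$), the points $P_\infty,P_0$, and $L+X+T+\frac{7q^2-3q-6}{2}+1$ further rational points distinct from these, yielding an $X$-secure and $T$-private information retrieval scheme with $N=L+X+T+3q^2-q-2$ servers and rate $L/N$. The total number of rational points needed is $2L+X+T+4q^2-2q$. *)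

(* Defs.v *)
From mathcomp Require Import all_boot all_order all_algebra.
Set Implicit Arguments. Unset Strict Implicit. Unset Printing Implicit Defensive.
Import Order.TTheory GRing.Theory Num.Theory.

Definition herm_genus (q : nat) : nat := (q * (q - 1)) %/ 2.

Definition herm_N (q X T L : nat) : nat := L + X + T + 3 * q ^ 2 - q - 2.

Definition herm_rate (q X T L : nat) : rat := (L%:R / (herm_N q X T L)%:R)%R.

(* admissible L: positive, L + g = 0 mod q, and the needed
   2L + X + T + 4q^2 - 2q rational points fit in the q^3 + 1 points of H_q *)
Definition herm_admissible (q X T L : nat) : bool :=
  [&& 0 < L, q %| L + herm_genus q & 2 * L + X + T + 4 * q ^ 2 - 2 * q <= q ^ 3 + 1].

Definition herm_m (q X T : nat) : int :=
  ((((q ^ 3)%:Z - 3 * (q ^ 2)%:Z + q%:Z + 1 - (X + T)%:Z)%R) %/ (2 * q)%:Z)%Z.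

Definition prime_power (q : nat) : Prop := exists p k, prime p /\ 0 < k /\ q = p ^ k.

(* Main.v *)
Require Import Defs.
From mathcomp Require Import all_boot all_order all_algebra.
From mathcomp Require Import zify.
Import Order.TTheory GRing.Theory Num.Theory.

Lemma genus2 q : 0 < q -> 2 * herm_genus q + q = q ^ 2.
Proof.
move=> q0; rewrite /herm_genus.
have h2 : 2 %| q * (q - 1).
  case: q q0 => // n _; rewrite subn1 /= dvdn2 oddM /=.
  by case: (odd n).
rewrite mulnC divnK //.
case: q q0 h2 => // n _ _; rewrite subn1 /= expnS expn1; lia.
Qed.

Lemma adm_iff q X T L : herm_admissible q X T L <->
  [/\ 0 < L, exists k, L + herm_genus q = k * q &
      2 * L + X + T + 4 * q ^ 2 - 2 * q <= q ^ 3 + 1].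
Proof.
rewrite /herm_admissible; split.
  by case/and3P => a /dvdnP b c; split.
by case=> a [k hk] c; apply/and3P; split => //; rewrite hk dvdn_mull.
Qed.

Theorem proposition3p5 (q X T : nat) :
  prime_power q -> 0 < X -> 0 < T ->
  (exists L, herm_admissible q X T L) ->
  exists L : nat,
    [/\ herm_admissible q X T L,
        Posz L = (herm_m q X T * Posz q - Posz (herm_genus q))%R &
        forall L', herm_admissible q X T L' ->
          (herm_rate q X T L' <= herm_rate q X T L)%R].
Proof.
move=> [p [k [pp [k0 Eq]]]] X0 T0 [L0 HL0].
have q2 : 2 <= q.
  rewrite Eq; apply: leq_trans (prime_gt1 pp) _.
  by rewrite -{1}(expn1 p) leq_pexp2l // prime_gt0.
clear Eq.
have q0 : 0 < q by lia.
have Hg := @genus2 q q0.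
set g := herm_genus q in Hg *.
have qq : 2 * q <= q ^ 2 by rewrite expnS expn1 leq_mul2r q2 orbT.
have q3 : q ^ 3 = q * q ^ 2 by rewrite expnS.
set A : int := ((q ^ 3)%:Z - 3 * (q ^ 2)%:Z + q%:Z + 1 - (X + T)%:Z)%R.
have key : forall L kk, L + g = kk * q ->
   (2 * L + X + T + 4 * q ^ 2 - 2 * q <= q ^ 3 + 1) = ((Posz kk * Posz (2 * q) <= A)%R).
  move=> L kk hk; rewrite /A.
  have -> : (Posz kk * Posz (2 * q))%R = Posz (2 * (kk * q)) by rewrite -PoszM; congr Posz; lia.
  rewrite -hk; apply/idP/idP; lia.
have d0 : (0 < Posz (2 * q))%R by rewrite ltz_nat; lia.
have [hL0pos [k1 hk1] hin1] := (adm_iff q X T L0).1 HL0.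
rewrite (key _ _ hk1) in hin1.
have km : (Posz k1 <= herm_m q X T)%R by rewrite /herm_m lez_divRL.
have fl : (herm_m q X T * Posz (2 * q) <= A)%R by rewrite /herm_m lez_floor // gt_eqF.
have [mn hm] : exists mn : nat, herm_m q X T = Posz mn.
  case E: (herm_m q X T) => [n|n]; first by exists n.
  by rewrite E in km.
rewrite hm in km fl.
have km' : k1 <= mn by rewrite -lez_nat.
have kq : k1 * q <= mn * q by rewrite leq_mul2r km' orbT.
have Lg : g < mn * q by lia.
have admL : herm_admissible q X T (mn * q - g).
  apply/adm_iff; split; first lia.
    by exists mn; rewrite subnK // ltnW.
  by rewrite (key _ mn) // subnK // ltnW.
exists (mn * q - g); split => //.
  by rewrite hm -PoszM subzn // ltnW.
move=> L' HL'.
have [_ [k2 hk2] hin2] := (adm_iff q X T L').1 HL'.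
rewrite (key _ _ hk2) in hin2.
have k2m : k2 <= mn.
  rewrite -(@lez_divRL _ _ (Posz (2 * q))) // in hin2.
  by rewrite -lez_nat -hm.
have LL : L' <= mn * q - g.
  have : k2 * q <= mn * q by rewrite leq_mul2r k2m orbT.
  lia.
set L := mn * q - g in LL *.
have N c : herm_N q X T c = c + (X + T + 3 * q ^ 2 - q - 2) by rewrite /herm_N; lia.
rewrite /herm_rate !N.
set c := X + T + 3 * q ^ 2 - q - 2.
have c0 : 0 < c by rewrite /c; lia.
rewrite ler_pdivrMr ?ltr0n ?addn_gt0 ?c0 ?orbT // mulrAC ler_pdivlMr ?ltr0n ?addn_gt0 ?c0 ?orbT //.
rewrite -!natrM ler_nat.
have : L' * c <= L * c by rewrite leq_mul2r LL orbT.
nia.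
Qed.
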